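(* Let $f_{AN_2}(x)=\frac{x+1}{2}-\left(\frac{\sqrt x+1}{2}\right)\sqrt{\frac{x+1}{2}}$ for $x\in(0,\infty)$, let $f_{AN_2}^*(u)=u\,f_{AN_2}\!\left(\frac{1-u}{u}\right)$ for $u\in(0,1)$, extended by continuity to $[0,1]$ (explicitly $f_{AN_2}^*(u)=\frac12-\frac{\sqrt2}{4}\left(\sqrt u+\sqrt{1-u}\right)$), and define $\overline M_{AN_2}(C_1,C_2)=E_X\{f_{AN_2}^*(P(C_2\mid x))\}$. Then $$P_e\le \frac12\left[1-\frac{4}{2-\sqrt2}\,\overline M_{AN_2}(C_1,C_2)\right].$$
   Context: Two-class decision problem: classes $C_1,C_2$, an observation $x$ in a space $\mathrm X$ with density $p(x)$, and a posteriori probabilities $P(C_1\mid x),P(C_2\mid x)\ge0$ with $P(C_1\mid x)+P(C_2\mid x)=1$. $E_X\{g(x)\}=\int_{\mathrm X} g(x)p(x)\,dx$. $P_e=E_X\{\min(P(C_1\mid x),P(C_2\mid x))\}$ is the Bayesian probability of error. *)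

(* Defs.v *)
From HB Require Import structures.
From mathcomp Require Import all_boot all_order all_algebra.
From mathcomp Require Import all_classical all_reals all_analysis.
Set Implicit Arguments. Unset Strict Implicit. Unset Printing Implicit Defensive.
Import Order.TTheory GRing.Theory Num.Theory.
Local Open Scope ring_scope.

Definition fAN2 {R : realType} (x : R) : R :=
  (x + 1) / 2 - ((Num.sqrt x + 1) / 2) * Num.sqrt ((x + 1) / 2).

(* f*_{AN_2}(u) = u f_{AN_2}((1-u)/u) on (0,1), extended by continuity to
   [0,1]; the continuous extension at u = 0 and u = 1 equals
   1/2 - sqrt 2 / 4 (value of the explicit formula there). *)
Definition fAN2_star {R : realType} (u : R) : R :=
  if (0 < u) && (u < 1) then u * fAN2 ((1 - u) / u)
  else 1 / 2 - Num.sqrt 2 / 4.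

(* Main.v *)
Require Import Defs.
From HB Require Import structures.
From mathcomp Require Import all_boot all_order all_algebra.
From mathcomp Require Import all_classical all_reals all_analysis.
From mathcomp Require Import ring lra measurable_realfun realfun.
Import Order.TTheory GRing.Theory Num.Theory.
Local Open Scope ring_scope.

Lemma key (R : realType) (a b s : R) : 0 <= a -> a <= b -> a^+2 + b^+2 = 1 ->
  s^+2 = 2 -> 0 < s ->
  0 <= (2-s)*(b^+2-a^+2) - 2 + s*(a+b).
Proof.
move=> a0 ab e s2 s0.
have s15 : s < 3/2 by nra.
set u := b - a; set t := a + b.
have u0 : 0 <= u by rewrite /u; lra.
have t0 : 0 <= t by rewrite /t; lra.
have tu : t^+2 + u^+2 = 2 by rewrite /t /u; nra.
have u1 : u <= 1 by rewrite /t /u in tu *; nra.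
have sq : (s + (2-s)*u)^+2 = 2 + (4*s-4)*u + (6-4*s)*u^+2.
  have -> : (s + (2-s)*u)^+2 = (2 + (4*s-4)*u + (6-4*s)*u^+2) + (s^+2-2)*(1-u)^+2 by ring.
  by rewrite s2 subrr mul0r addr0.
have P : (2 - u^+2) * (2 + (4*s-4)*u + (6-4*s)*u^+2) - 4
     = u*(1-u)*((6-4*s)*u^+2 + 2*u + 8*s-8) by ring.
have Q : 0 <= u*(1-u)*((6-4*s)*u^+2 + 2*u + 8*s-8).
  apply: mulr_ge0; first nra.
  have : 1 < s by nra.
  nra.
have H4 : 4 <= (t * (s + (2-s)*u))^+2.
  rewrite exprMn sq; have -> : t^+2 = 2 - u^+2 by lra. lra.
have H2 : 2 <= t * (s + (2-s)*u).
  have : 0 <= t * (s + (2-s)*u) by apply: mulr_ge0 => //; nra.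
  nra.
have -> : (2-s)*(b^+2-a^+2) - 2 + s*(a+b) = t * (s + (2-s)*u) - 2 by rewrite /t /u; ring.
lra.
Qed.

Definition hh {R : realType} (u : R) : R :=
  1 / 2 - Num.sqrt 2 / 4 * (Num.sqrt u + Num.sqrt (1 - u)).

Lemma s2facts (R : realType) : (Num.sqrt (2:R))^+2 = 2 /\ 0 < Num.sqrt (2:R).
Proof. by split; [rewrite sqr_sqrtr | rewrite sqrtr_gt0]. Qed.

Lemma half_ineq (R : realType) (a b p : R) : a^+2 = p -> 0 <= a -> a <= b -> a^+2 + b^+2 = 1 ->
  p <= 1/2 - 4 / (2 - Num.sqrt 2) / 2 *
     (1 / 2 - Num.sqrt 2 / 4 * (a + b)).
Proof.
move=> <- a0 ab e.
have [s2 s0] := s2facts R.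
set s := Num.sqrt (2:R) in s2 s0 *.
have k0 : 0 < 2 - s by nra.
have D := @key R a b s a0 ab e s2 s0.
have E : 1/2 - 4 / (2 - s) / 2 * (1 / 2 - s / 4 * (a + b)) - a^+2 =
   ((2-s)*(1 - 2 * a^+2) - 2 + s*(a+b)) / (2 * (2 - s)).
  by field; lra.
suff : 0 <= ((2-s)*(1 - 2 * a^+2) - 2 + s*(a+b)) / (2 * (2 - s)) by rewrite -E subr_ge0.
apply: divr_ge0; last lra.
have -> : 1 - 2 * a^+2 = b^+2 - a^+2 by lra.
exact: D.
Qed.

Lemma pointwise (R : realType) (p1 p2 : R) : 0 <= p1 -> 0 <= p2 -> p1 + p2 = 1 ->
  Order.min p1 p2 <= 1/2 - 4 / (2 - Num.sqrt 2) / 2 * hh p2.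
Proof.
move=> p10 p20 e.
have ep1 : p1 = 1 - p2 by lra.
rewrite /hh -ep1.
have Ea : Num.sqrt p1 ^+2 = p1 by rewrite sqr_sqrtr.
have Eb : Num.sqrt p2 ^+2 = p2 by rewrite sqr_sqrtr.
have [h|h] := leP p2 p1.
- apply: (@half_ineq R (Num.sqrt p2) (Num.sqrt p1) p2 Eb (sqrtr_ge0 _)).
    by rewrite ler_sqrt.
  by rewrite Ea Eb; lra.
- rewrite [Num.sqrt p2 + _]addrC.
  apply: (@half_ineq R (Num.sqrt p1) (Num.sqrt p2) p1 Ea (sqrtr_ge0 _)).
    by rewrite ler_sqrt //; lra.
  by rewrite Ea Eb; lra.
Qed.

Lemma fstar_eq (R : realType) (u : R) : 0 <= u <= 1 -> fAN2_star u = hh u.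
Proof.
move=> /andP[u0 u1]; rewrite /fAN2_star /hh.
case: ifP => [/andP[ul ur]|/negbT].
  rewrite /fAN2.
  have -> : ((1 - u) / u + 1) / 2 = u^-1 * 2^-1 by field; lra.
  rewrite sqrtrM ?invr_ge0; last lra.
  rewrite [Num.sqrt (u^-1 / 2)]sqrtrM; last by rewrite invr_ge0; lra.
  rewrite !sqrtrV ?(ltW ul) //.
  have su : 0 < Num.sqrt u by rewrite sqrtr_gt0.
  have [s2 s0] := s2facts R.
  have Eu : Num.sqrt u ^+2 = u by rewrite sqr_sqrtr.
  set a := Num.sqrt u in su Eu *.
  set b := Num.sqrt (1 - u).
  set s := Num.sqrt (2:R) in s2 s0 *.
  rewrite -Eu.
  have Hs : s^-1 = s / 2.
    by rewrite -s2 expr2 invfM mulrA mulfV ?mul1r //; apply/eqP; lra.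
  rewrite Hs; clearbody a b s.
  field; lra.
rewrite negb_and -!leNgt => /orP[h|h].
  have -> : u = 0 by lra.
  by rewrite subr0 sqrtr0 sqrtr1; congr (_ - _); field.
have -> : u = 1 by lra.
by rewrite subrr sqrtr0 sqrtr1; congr (_ - _); field.
Qed.

Lemma hh_bound (R : realType) (u : R) : 0 <= u <= 1 -> `|hh u| <= 1.
Proof.
move=> /andP[u0 u1]; rewrite /hh.
have [s2 s0] := s2facts R.
have a0 := sqrtr_ge0 u. have b0 := sqrtr_ge0 (1 - u).
have Ea : Num.sqrt u ^+2 = u by rewrite sqr_sqrtr.
have Eb : Num.sqrt (1 - u) ^+2 = 1 - u by rewrite sqr_sqrtr // subr_ge0.
set a := Num.sqrt u in a0 Ea *. set b := Num.sqrt (1 - u) in b0 Eb *.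
set s := Num.sqrt (2:R) in s2 s0 *.
have a1 : a <= 1 by nra. have b1 : b <= 1 by nra.
have s15 : s <= 3/2 by nra.
rewrite ler_norml; apply/andP; split; nra.
Qed.

Section Main.
Local Open Scope ereal_scope.

Lemma bdd_int (d : measure_display) (X : measurableType d)
  (R : realType) (PX : probability X R) (f : X -> R) (M : R) :
  measurable_fun setT f -> (forall x, (`|f x| <= M)%R) ->
  PX.-integrable setT (EFin \o f).
Proof.
move=> mf bf; apply: measurable_bounded_integrable => //.
  exact: (le_lt_trans (probability_le1 PX measurableT) (ltry 1)).
exists M; split; first by rewrite num_real.
move=> N MN x _; apply: le_trans (bf x) _; exact: ltW.
Qed.

End Main.

Local Open Scope ereal_scope.

Theorem mainTheorem7 (d : measure_display) (X : measurableType d)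
  (R : realType) (PX : probability X R) (P1 P2 : X -> R)
  (mP1 : measurable_fun setT P1) (mP2 : measurable_fun setT P2)
  (P1ge0 : forall x, (0 <= P1 x)%R) (P2ge0 : forall x, (0 <= P2 x)%R)
  (P12 : forall x, (P1 x + P2 x)%R = 1%R) :
  let Pe := \int[PX]_x (Order.min (P1 x) (P2 x))%:E in
  let MAN2 := \int[PX]_x (fAN2_star (P2 x))%:E in
  Pe <= (1 / 2)%:E * (1%:E - (4 / (2 - Num.sqrt 2))%:E * MAN2).
Proof.
cbv zeta.
set MAN2 := \int[PX]_x (fAN2_star (P2 x))%:E.
have P21 : forall x, (0 <= P2 x <= 1)%R.
  by move=> x; apply/andP; split => //; have := P12 x; have := P1ge0 x; lra.
set c := (4 / (2 - Num.sqrt 2))%R.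
pose G x := hh (P2 x).
have msq : measurable_fun setT (@Num.sqrt R).
  apply: continuous_measurable_fun; exact: (@sqrt_continuous R).
have mG : measurable_fun setT G.
  rewrite /G /hh; apply: measurable_funB; first exact: measurable_cst.
  apply: measurable_funM; first exact: measurable_cst.
  apply: measurable_funD; first exact: measurableT_comp msq mP2.
  apply: measurableT_comp msq _.
  apply: measurable_funB; [exact: measurable_cst | exact: mP2].
have EM : MAN2 = \int[PX]_x (G x)%:E.
  by apply: eq_integral => x _; rewrite fstar_eq.
have iG : PX.-integrable setT (EFin \o G).
  apply: (@bdd_int _ _ _ _ _ 1 mG) => x; exact: hh_bound.
have Gb : forall x, (-1 <= G x <= 1)%R by move=> x; rewrite -ler_norml; exact: hh_bound.
have [s2 s0] := s2facts R.
have c0 : (0 < c)%R by rewrite /c; apply: divr_gt0 => //; nra.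
have im : PX.-integrable setT (EFin \o (fun x => Order.min (P1 x) (P2 x))).
  apply: (@bdd_int _ _ _ _ _ 1); first exact: measurable_minr.
  move=> x; have /andP[h1 h2] := P21 x; have h3 := P1ge0 x.
  rewrite ler_norml; case: (leP (P1 x) (P2 x)) => h; apply/andP; split; lra.
pose F x := (1/2 - c/2 * G x)%R.
have iC : PX.-integrable setT (EFin \o (fun _ : X => (1/2)%R)).
  by apply: (@bdd_int _ _ _ _ _ 1); [exact: measurable_cst | move=> x; rewrite ger0_norm; lra].
have iG2 : PX.-integrable setT (EFin \o (fun x => c/2 * G x)%R).
  apply: (@bdd_int _ _ _ _ _ c); first by apply: measurable_funM => //; exact: measurable_cst.
  move=> x; have /andP[? ?] := Gb x; rewrite ler_norml; apply/andP; split; nra.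
have iF : PX.-integrable setT (EFin \o F).
  apply: (@bdd_int _ _ _ _ _ (1/2 + c)%R).
    by apply: measurable_funB; [exact: measurable_cst | apply: measurable_funM => //; exact: measurable_cst].
  move=> x; have /andP[? ?] := Gb x; rewrite /F ler_norml; apply/andP; split; nra.
have step1 : \int[PX]_x (Order.min (P1 x) (P2 x))%:E <= \int[PX]_x (F x)%:E.
  apply: le_integral => // x _; rewrite lee_fin /F /G.
  exact: pointwise.
apply: (le_trans step1).
have -> : \int[PX]_x (F x)%:E = \int[PX]_x (((1/2)%R)%:E - (c/2 * G x)%:E).
  by apply: eq_integral => x _; rewrite /F EFinB.
rewrite integralB_EFin //.
have -> : \int[PX]_x (((1/2)%R)%:E) = ((1/2)%R)%:E.
  rewrite integral_cst // -[RHS]mule1; congr (_ * _); exact: probability_setT.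
have -> : \int[PX]_x ((c/2 * G x)%R%:E) = ((c/2)%R)%:E * \int[PX]_x (G x)%:E.
  by rewrite -integralZl //.
rewrite EM.
have := integrable_fin_num measurableT iG.
set I := \int[PX]_x (G x)%:E.
move=> /fineK <-.
set i := fine I.
have -> : (1 - c%:E * i%:E) = (1 - c * i)%:E by rewrite EFinB EFinM.
rewrite -EFinM -EFinM -EFinB lee_fin.
lra.
Qed.
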